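(* Let $n>1$, $\rho>0$ and $c>0$, and let $\mathrm{ad}(B_1^R)^*$ denote the adjoint of $\mathrm{ad}(B_1^R)$ with respect to the inner product $g_\rho^c$ on $\mathfrak{l}$. Then $[\mathrm{ad}(B_1^R),\mathrm{ad}(B_1^R)^*]\neq0$.
   Context: Fix $n\ge 2$, $\rho>0$, $c\ge0$. The real Lie algebra $\mathfrak{l}$ has basis $B_a^R,B_a^I$ ($a=1,\dots,n-1$), $e_k,f_k$ ($k=0,\dots,n-1$), $Z$. Brackets (unlisted brackets of basis elements, up to antisymmetry, are zero): $[B_1^R,B_1^I]=2B_1^I$; for $a\in\{2,\dots,n-1\}$: $[B_1^R,B_a^R]=B_a^R$, $[B_1^R,B_a^I]=B_a^I$, $[B_a^R,B_a^I]=\tfrac12B_1^I$; $[e_0,f_0]=Z$, $[e_a,f_a]=-Z$ ($a\ge1$); $[B,Z]=0$. Mixed brackets after complex-bilinear extension, $E_k:=e_k-if_k$, $[B,\bar E_k]=\overline{[B,E_k]}$ for real $B$: for $a\ge2$, $[B_1^R,E_k]=-\delta_{k0}E_1-\delta_{k1}E_0$, $[B_a^R,E_k]=-\tfrac12(\delta_{k0}+\delta_{k1})E_a-\tfrac12\delta_{ka}(E_0-E_1)$, $[B_1^I,E_k]=-i(\delta_{k0}+\delta_{k1})(E_0-E_1)$, $[B_a^I,E_k]=\tfrac{i}{2}(\delta_{k0}+\delta_{k1})E_a-\tfrac{i}{2}\delta_{ka}(E_0-E_1)$. Inner product $g_\rho^c$: $g(B_1^R,B_1^R)=\frac{\rho+c}{\rho}$,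 $g(B_1^I,B_1^I)=\frac{(\rho+c)^3}{\rho^2(\rho+2c)}$, $g(B_a^R,B_a^R)=g(B_a^I,B_a^I)=\frac{\rho+c}{4\rho}$ ($a\ge2$), $g(e_0,e_0)=g(f_0,f_0)=\frac{\rho+2c}{4\rho^2}$, $g(e_a,e_a)=g(f_a,f_a)=\frac1{4\rho}$ ($a\ge1$), $g(Z,Z)=\frac{\rho+c}{4\rho^2(\rho+2c)}$, $g(B_1^I,Z)=-\frac{c(\rho+c)}{2\rho^2(\rho+2c)}$, all other distinct basis pairs orthogonal. *)

(* Defs.v *)
From HB Require Import structures.
From mathcomp Require Import all_boot all_order all_algebra.
Set Implicit Arguments. Unset Strict Implicit. Unset Printing Implicit Defensive.
Import Order.TTheory GRing.Theory Num.Theory.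
Local Open Scope ring_scope.

(* Basis index of the real Lie algebra l (dimension 4n-1):
   inl (inl (false, a)) = B^R_{a+1},  inl (inl (true, a)) = B^I_{a+1}   (a : 'I_(n-1))
   inl (inr (false, k)) = e_k,        inl (inr (true, k)) = f_k         (k : 'I_n)
   inr tt               = Z                                                          *)
Notation lidx n := ((bool * 'I_(n.-1)) + (bool * 'I_n) + unit)%type.

Notation lvec R n := {ffun lidx n -> R^o}.

Section LieAlg.
Variables (R : realFieldType) (n : nat).

Definition lbasis (i : lidx n) : lvec R n := [ffun j => (j == i)%:R].
Definition vBR (a : 'I_(n.-1)) := lbasis (inl (inl (false, a))).
Definition vBI (a : 'I_(n.-1)) := lbasis (inl (inl (true, a))).
Definition ve (k : 'I_n) := lbasis (inl (inr (false, k))).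
Definition vf (k : 'I_n) := lbasis (inl (inr (true, k))).
Definition vZ := lbasis (inr tt).

(* B_1^R and B_1^I as vectors (avoid building the ordinal 0 : 'I_(n-1)) *)
Definition vB1R : lvec R n :=
  [ffun j => match j with inl (inl (false, a)) => (val a == 0%N)%:R | _ => 0 end].
Definition vB1I : lvec R n :=
  [ffun j => match j with inl (inl (true, a)) => (val a == 0%N)%:R | _ => 0 end].

Definition dlt (x y : nat) : R := (x == y)%:R.

(* A complex combination  sum_j (p j + i q j) E_j  with E_j = e_j - i f_j.
   Its real part is sum_j (p j e_j + q j f_j), its imaginary part is
   sum_j (q j e_j - p j f_j).  For real B:  [B,e_k] = Re [B,E_k],
   [B,f_k] = - Im [B,E_k]. *)
Definition reE (p q : 'I_n -> R) : lvec R n := \sum_j (p j *: ve j + q j *: vf j).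
Definition negimE (p q : 'I_n -> R) : lvec R n := \sum_j (p j *: vf j - q j *: ve j).

(* coefficients (p j, q j) of [B, E_k] on E_j, for B = B^R_{a+1} (b = false)
   or B = B^I_{a+1} (b = true); the label of B is (val a).+1 *)
Definition Ecoef (b : bool) (a : 'I_(n.-1)) (k j : 'I_n) : R * R :=
  let la := (val a).+1 in
  let s01 := dlt k 0 + dlt k 1 in
  let d01 := dlt j 0 - dlt j 1 in
  if la == 1%N then
    (if ~~ b then
       (* [B_1^R, E_k] = - d_{k0} E_1 - d_{k1} E_0 *)
       (- (dlt k 0 * dlt j 1 + dlt k 1 * dlt j 0), 0)
     else
       (* [B_1^I, E_k] = -i (d_{k0}+d_{k1}) (E_0 - E_1) *)
       (0, - (s01 * d01)))
  else
    (if ~~ b then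
       (* [B_a^R, E_k] = -1/2 (d_{k0}+d_{k1}) E_a - 1/2 d_{ka} (E_0 - E_1) *)
       (- (1/2) * s01 * dlt j la - (1/2) * dlt k la * d01, 0)
     else
       (* [B_a^I, E_k] = i/2 (d_{k0}+d_{k1}) E_a - i/2 d_{ka} (E_0 - E_1) *)
       (0, (1/2) * s01 * dlt j la - (1/2) * dlt k la * d01)).

(* the listed brackets of basis elements, one orientation each *)
Definition lbr_listed (i j : lidx n) : lvec R n :=
  match i, j with
  | inl (inl (false, a)), inl (inl (bj, b)) =>
      if val a == 0%N then
        (if val b == 0%N then (if bj then 2 *: vB1I else 0)
         else (if bj then vBI b else vBR b))
      else
        (if bj && (a == b) then (1/2) *: vB1I else 0)
  | inl (inl (b, a)), inl (inr (false, k)) =>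
      reE (fun j => (Ecoef b a k j).1) (fun j => (Ecoef b a k j).2)
  | inl (inl (b, a)), inl (inr (true, k)) =>
      negimE (fun j => (Ecoef b a k j).1) (fun j => (Ecoef b a k j).2)
  | inl (inr (false, k)), inl (inr (true, l)) =>
      if k == l then (if val k == 0%N then vZ else - vZ) else 0
  | _, _ => 0
  end.

Definition lbr_basis (i j : lidx n) : lvec R n := lbr_listed i j - lbr_listed j i.

Definition lbr (x y : lvec R n) : lvec R n :=
  \sum_i \sum_j (x i * y j) *: lbr_basis i j.

Definition ad (x : lvec R n) : lvec R n -> lvec R n := lbr x.

Definition gram (rho c : R) (i j : lidx n) : R :=
  match i, j with
  | inl (inl (false, a)), inl (inl (false, b)) =>
      if a == b then (if val a == 0%N then (rho + c) / rho else (rho + c) / (4 * rho))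
      else 0
  | inl (inl (true, a)), inl (inl (true, b)) =>
      if a == b then
        (if val a == 0%N then (rho + c) ^+ 3 / (rho ^+ 2 * (rho + 2 * c))
         else (rho + c) / (4 * rho))
      else 0
  | inl (inr (b1, k)), inl (inr (b2, l)) =>
      if (b1 == b2) && (k == l) then
        (if val k == 0%N then (rho + 2 * c) / (4 * rho ^+ 2) else 1 / (4 * rho))
      else 0
  | inr tt, inr tt => (rho + c) / (4 * rho ^+ 2 * (rho + 2 * c))
  | inl (inl (true, a)), inr tt | inr tt, inl (inl (true, a)) =>
      if val a == 0%N then - (c * (rho + c)) / (2 * rho ^+ 2 * (rho + 2 * c)) else 0
  | _, _ => 0
  end.

Definition g (rho c : R) (x y : lvec R n) : R :=
  \sum_i \sum_j x i * y j * gram rho c i j.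

End LieAlg.

(* Main.v *)
Require Import Defs.
From HB Require Import structures.
From mathcomp Require Import all_boot all_order all_algebra.
From mathcomp Require Import ring lra.
Import Order.TTheory GRing.Theory Num.Theory.
Local Open Scope ring_scope.

Arguments gram : simpl never.
Section Aux.
Variables (R : realFieldType) (n : nat).

Lemma reE_l (p q : 'I_n -> R) x : reE p q (inl (inl x)) = 0.
Proof. by rewrite /reE sum_ffunE big1 // => j _; rewrite !ffunE /= !scaler0 addr0. Qed.
Lemma reE_r (p q : 'I_n -> R) : reE p q (inr tt) = 0.
Proof. by rewrite /reE sum_ffunE big1 // => j _; rewrite !ffunE /= !scaler0 addr0. Qed.
Lemma negimE_l (p q : 'I_n -> R) x : negimE p q (inl (inl x)) = 0.
Proof. by rewrite /negimE sum_ffunE big1 // => j _; rewrite !ffunE /= !scaler0 subr0. Qed.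
Lemma negimE_r (p q : 'I_n -> R) : negimE p q (inr tt) = 0.
Proof. by rewrite /negimE sum_ffunE big1 // => j _; rewrite !ffunE /= !scaler0 subr0. Qed.

Variable (a0 : 'I_(n.-1)).
Hypothesis a00 : (a0 : nat) = 0%N.
Lemma neq0 (b : 'I_(n.-1)) : b != a0 -> (b : nat) != 0%N.
Proof. by apply: contra => /eqP hb; apply/eqP/val_inj; rewrite /= hb a00. Qed.
Definition iB1R : lidx n := inl (inl (false, a0)).
Definition iB1I : lidx n := inl (inl (true, a0)).
Definition iZ : lidx n := inr tt.

Lemma lbB1I j : lbr_basis R iB1R j iB1I = (j == iB1I)%:R * 2.
Proof.
rewrite /lbr_basis ffunE.
case: j => [[[[] b]|[[] k]]|[]] /=; rewrite ?a00 /= !ffunE /= ?oppr0 ?addr0 ?mul0r ?reE_l ?negimE_l //.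
- have [->|hb] := eqVneq b a0; first by rewrite ?a00 /= !ffunE /= ?a00 !eqxx -[LHS]/(2 * 1 : R) mulr1 mul1r.
  rewrite (negPf (neq0 _ hb)) !ffunE /=.
  have e : (iB1I == inl (inl (true, b)) :> lidx n) = false.
    by apply/eqP => -[] /esym/eqP; rewrite (negPf hb).
  by rewrite e eq_sym e mul0r.
- by case: ifP => _; rewrite !ffunE /= ?subr0.
Qed.


Lemma lbZ j : lbr_basis R iB1R j iZ = 0.
Proof.
rewrite /lbr_basis ffunE.
case: j => [[[[] b]|[[] k]]|[]] /=; rewrite ?a00 /= !ffunE /= ?oppr0 ?addr0 ?reE_r ?negimE_r //.
- by case: (nat_of_ord b == 0%N); rewrite !ffunE /= ?scaler0.
- by case: (nat_of_ord b == 0%N); rewrite !ffunE /= ?subr0.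
Qed.

Lemma lbRZ : lbr_basis R iB1R iZ = 0.
Proof. by rewrite /lbr_basis /= subr0. Qed.

Lemma sum1 (F : lidx n -> R) i1 :
  (forall j, j != i1 -> F j = 0) -> \sum_j F j = F i1.
Proof.
move=> hF; rewrite (bigD1 i1) //= big1 ?addr0 // => j /andP [_ h]; exact: hF.
Qed.

Lemma vB1R0 i : i != iB1R -> vB1R R n i = 0.
Proof.
case: i => [[[[] b]|[[] k]]|[]] //=; rewrite ffunE //= => hb.
have hb' : b != a0 by apply: contra hb => /eqP ->.
by rewrite (negPf (neq0 _ hb')).
Qed.

Lemma vB1R1 : vB1R R n iB1R = 1.
Proof. by rewrite ffunE /= a00. Qed.

Lemma ad_coord (w : lvec R n) k : ad (vB1R R n) w k = \sum_j w j * lbr_basis R iB1R j k.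
Proof.
rewrite /ad /lbr sum_ffun ffunE (bigD1 iB1R) //= [X in _ + X]big1 ?addr0.
  rewrite sum_ffunE; apply: eq_bigr => j _; rewrite ffunE vB1R1 mul1r; done.
move=> i hi; rewrite sum_ffunE big1 // => j _; rewrite ffunE vB1R0 // mul0r.
by rewrite -[LHS]/(0 * _ : R) mul0r.
Qed.

Lemma ad_B (w : lvec R n) : ad (vB1R R n) w iB1I = w iB1I * 2.
Proof.
rewrite ad_coord (sum1 _ iB1I); first by rewrite lbB1I eqxx mul1r.
by move=> j hj; rewrite lbB1I (negPf hj) mul0r mulr0.
Qed.

Lemma ad_Z (w : lvec R n) : ad (vB1R R n) w iZ = 0.
Proof. by rewrite ad_coord big1 // => j _; rewrite lbZ mulr0. Qed.

Lemma sum2 (F : lidx n -> R) i1 i2 : i1 != i2 ->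
  (forall j, j != i1 -> j != i2 -> F j = 0) -> \sum_j F j = F i1 + F i2.
Proof.
move=> h12 hF; rewrite (bigD1 i1) //= (bigD1 i2) /=; last by rewrite eq_sym h12.
rewrite big1 ?addr0 // => j /andP [h1 h2]; exact: hF.
Qed.


Variables (rho c : R).

Lemma gramB0 j : j != iB1I -> j != iZ -> gram rho c iB1I j = 0.
Proof.
rewrite /gram /iB1I /iZ; case: j => [[[[] b]|[[] k]]|[]] /= hb _ //.
have hb' : b != a0 by apply: contra hb => /eqP ->.
by rewrite eq_sym (negPf hb').
Qed.

Lemma gramZ0 j : j != iB1I -> j != iZ -> gram rho c j iZ = 0.
Proof.
rewrite /gram /iB1I /iZ; case: j => [[[[] b]|[[] k]]|[]] /= hb _ //.
have hb' : b != a0 by apply: contra hb => /eqP ->.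
by rewrite (negPf (neq0 _ hb')).
Qed.

Lemma gramZ0' j : j != iB1I -> j != iZ -> gram rho c iZ j = 0.
Proof.
rewrite /gram /iB1I /iZ; case: j => [[[[] b]|[[] k]]|[]] /= hb _ //.
have hb' : b != a0 by apply: contra hb => /eqP ->.
by rewrite (negPf (neq0 _ hb')).
Qed.

Lemma BZ : iB1I != iZ. Proof. by []. Qed.

Lemma gb (y : lvec R n) : g rho c (lbasis R iB1I) y =
  y iB1I * gram rho c iB1I iB1I + y iZ * gram rho c iB1I iZ.
Proof.
rewrite /g (bigD1 iB1I) //= [X in _ + X]big1 ?addr0.
  rewrite (sum2 _ _ _ BZ) /=; first by rewrite !ffunE eqxx !mul1r.
  by move=> j h1 h2; rewrite gramB0 // mulr0.
by move=> i hi; apply: big1 => j _; rewrite ffunE (negPf hi) !mul0r.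
Qed.

Lemma gz (y : lvec R n) : g rho c (lbasis R iZ) y =
  y iB1I * gram rho c iZ iB1I + y iZ * gram rho c iZ iZ.
Proof.
rewrite /g (bigD1 iZ) //= [X in _ + X]big1 ?addr0.
  rewrite (sum2 _ _ _ BZ) /=; first by rewrite !ffunE eqxx !mul1r.
  by move=> j h1 h2; rewrite gramZ0' // mulr0.
by move=> i hi; apply: big1 => j _; rewrite ffunE (negPf hi) !mul0r.
Qed.

Lemma g0 (x : lvec R n) : g rho c x 0 = 0.
Proof. by rewrite /g big1 // => i _; rewrite big1 // => j _; rewrite ffunE mulr0 mul0r. Qed.
Lemma g0l (x : lvec R n) : g rho c 0 x = 0.
Proof. by rewrite /g big1 // => i _; rewrite big1 // => j _; rewrite ffunE !mul0r. Qed.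

Lemma gzr (y : lvec R n) : g rho c y (lbasis R iZ) =
  y iB1I * gram rho c iB1I iZ + y iZ * gram rho c iZ iZ.
Proof.
rewrite /g (eq_bigr (fun i => y i * gram rho c i iZ)); last first.
  move=> i _; rewrite (bigD1 iZ) //= [X in _ + X]big1 ?addr0.
    by rewrite ffunE eqxx mulr1.
  by move=> j hj; rewrite ffunE (negPf hj) mulr0 mul0r.
rewrite (sum2 _ _ _ BZ) // => j h1 h2.
by rewrite gramZ0 // mulr0.
Qed.
End Aux.

Theorem lemma4p14 (R : realFieldType) (n : nat) (rho c : R) :
  (1 < n)%N -> 0 < rho -> 0 < c ->
  forall S : lvec R n -> lvec R n,
    (forall x y : lvec R n,
        g rho c (ad (vB1R R n) x) y = g rho c x (S y)) ->
    exists v : lvec R n, ad (vB1R R n) (S v) - S (ad (vB1R R n) v) != 0.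
Proof.
move=> n1 rho0 c0 S HS.
have n1' : (0 < n.-1)%N by case: n n1 {S HS} => [|[|m]].
pose a0 : 'I_n.-1 := Ordinal n1'.
have a00 : (a0 : nat) = 0%N by [].
exists (vZ R n); apply/negP; rewrite subr_eq0 => /eqP H.
have AZ : ad (vB1R R n) (vZ R n) = 0.
  apply/ffunP => k; rewrite (@ad_coord R n a0 a00) ffunE (bigD1 (iZ n)) //= [X in _ + X]big1 ?addr0.
    by rewrite lbRZ !ffunE mulr0.
  by move=> j hj; rewrite ffunE (negPf hj) mul0r.
set b := lbasis R (iB1I n a0).
change (vZ R n) with (lbasis R (iZ n)) in H.
change (vZ R n) with (lbasis R (iZ n)) in AZ.
set (z := lbasis R (iZ n)) in *.
set (w := S z) in *.
have E1 := HS b z.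
have E2 := HS z z.
have E3 := HS b (ad (vB1R R n) z).
rewrite /z (@gzr R n a0 a00) (@ad_B R n a0 a00) (@ad_Z R n a0 a00) (@gb R n a0) in E1.
rewrite AZ g0l (@gz R n a0 a00) in E2.
rewrite -H AZ g0 (@gb R n a0) (@ad_B R n a0 a00) (@ad_Z R n a0 a00) in E3.
rewrite /b ffunE eqxx in E1.
have gBB : gram rho c (iB1I n a0) (iB1I n a0) = (rho + c) ^+ 3 / (rho ^+ 2 * (rho + 2 * c)).
  by rewrite /gram /=.
have gBZ : gram rho c (iB1I n a0) (iZ n) = - (c * (rho + c)) / (2 * rho ^+ 2 * (rho + 2 * c)).
  by rewrite /gram /=.
have gZB : gram rho c (iZ n) (iB1I n a0) = - (c * (rho + c)) / (2 * rho ^+ 2 * (rho + 2 * c)).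
  by rewrite /gram /=.
have gZZ : gram rho c (iZ n) (iZ n) = (rho + c) / (4 * rho ^+ 2 * (rho + 2 * c)).
  by rewrite /gram /=.
rewrite gBB gBZ gZB gZZ in E1 E2 E3.
move: E1 E2 E3; rewrite /w /z.
move: (S (lbasis R (iZ n)) (iB1I n a0)) (S (lbasis R (iZ n)) (iZ n)) => p q E1 E2 E3.
have rc : 0 < rho + c by lra.
have r2c : 0 < rho + 2 * c by lra.
have D1 : 0 < rho ^+ 2 * (rho + 2 * c) by rewrite mulr_gt0 // exprn_gt0.
have D2 : 0 < 2 * rho ^+ 2 * (rho + 2 * c) by rewrite -mulrA mulr_gt0.
have D4 : 0 < 4 * rho ^+ 2 * (rho + 2 * c) by rewrite -mulrA mulr_gt0.
have hB : (rho + c) ^+ 3 / (rho ^+ 2 * (rho + 2 * c)) != 0.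
  by rewrite lt0r_neq0 // divr_gt0 // exprn_gt0.
have hX : - (c * (rho + c)) / (2 * rho ^+ 2 * (rho + 2 * c)) != 0.
  by rewrite mulf_neq0 ?oppr_eq0 ?invr_eq0 ?lt0r_neq0 // mulr_gt0.
have hZ : (rho + c) / (4 * rho ^+ 2 * (rho + 2 * c)) != 0.
  by rewrite lt0r_neq0 // divr_gt0.
rewrite mul0r addr0 in E3.
have hp : p = 0.
  move/eqP: E3; rewrite eq_sym mulf_eq0 (negPf hB) orbF mulf_eq0 => /orP [/eqP //|].
  by rewrite pnatr_eq0.
rewrite hp !mul0r add0r addr0 /= mul1r in E1.
have hq : q = 2 by apply: (mulIf hX); rewrite -E1.
rewrite hp hq mul0r add0r in E2.
by move/eqP: E2; rewrite eq_sym mulf_eq0 (negPf hZ) orbF pnatr_eq0.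
Qed.
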